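(* For every positive integer $n$ there exists an acyclic unique sink orientation $\psi$ of the $n$-dimensional cube which is not $i$-nice for any $i < n-2$.
   Context: Let $Q^n = 2^{[n]}$ be the vertex set of the $n$-cube, with $u,v$ adjacent iff $|u\oplus v|=1$; faces are $F_{J,v}=\{u : v\oplus u\subseteq J\}$ for $J\subseteq[n]$. A unique sink orientation (USO) is an orientation of the cube's edges such that every nonempty face has a unique sink (vertex with no outgoing edges within the face); it is acyclic (an AUSO) if it has no directed cycle. The outmap $s_\psi(v)$ is the set of coordinates $j$ such that the edge $\{v,v\oplus\{j\}\}$ is directed away from $v$; the global sink is the vertex $t$ with $s_\psi(t)=\emptyset$. Let $d(v,u)$ be the length of a shortest directed path from $v$ to $u$ ($\infty$ if none). The reachmap is $r_\psi(v)=s_\psi(v)\cup\{j : \exists u \text{ reachable from } v \text{ by a directed path with } j\in s_\psi(u)\}$. A vertex $v$ is $i$-covered by $u$ if $d(v,u)\le i$ and $r_\psi(u)\subsetneq r_\psi(v)$; $\psi$ is $i$-nice if every vertex other than the global sink is $i$-covered by some vertex. *)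

(* Defs.v *)
From mathcomp Require Import all_boot.
Set Implicit Arguments. Unset Strict Implicit. Unset Printing Implicit Defensive.

Definition vertex (n : nat) := {set 'I_n}.

Definition symd (n : nat) (u v : vertex n) : vertex n := (u :\: v) :|: (v :\: u).

Definition adjacent (n : nat) (u v : vertex n) : bool := #|symd u v| == 1.

(* An orientation of the cube's edges, given as the relation
   "the edge {u,v} is directed from u to v". *)
Definition is_orientation (n : nat) (psi : rel (vertex n)) : Prop :=
  (forall u v, psi u v -> adjacent u v) /\
  (forall u v, adjacent u v -> (psi u v (+) psi v u)).

Definition face (n : nat) (J : {set 'I_n}) (v : vertex n) : {set vertex n} :=
  [set u | symd v u \subset J].

Definition is_sink_in (n : nat) (psi : rel (vertex n)) (F : {set vertex n})
  (u : vertex n) : bool :=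
  (u \in F) && [forall w, (w \in F) ==> ~~ psi u w].

Definition is_USO (n : nat) (psi : rel (vertex n)) : Prop :=
  is_orientation psi /\
  forall (J : {set 'I_n}) (v : vertex n),
    (face J v != set0) ->
    exists! u, is_sink_in psi (face J v) u.

Definition acyclic (n : nat) (psi : rel (vertex n)) : Prop :=
  forall u v, psi u v -> ~~ connect psi v u.

Definition is_AUSO (n : nat) (psi : rel (vertex n)) : Prop :=
  is_USO psi /\ acyclic psi.

Definition outmap (n : nat) (psi : rel (vertex n)) (v : vertex n) : {set 'I_n} :=
  [set j | psi v (symd v [set j])].

Definition reachmap (n : nat) (psi : rel (vertex n)) (v : vertex n) : {set 'I_n} :=
  outmap psi v :|:
  [set j | [exists u, connect psi v u && (j \in outmap psi u)]].

Definition dist_le (n : nat) (psi : rel (vertex n)) (v u : vertex n) (i : nat) : Prop :=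
  exists p : seq (vertex n), [/\ size p <= i, path psi v p & last v p = u].

Definition i_covered (n : nat) (psi : rel (vertex n)) (i : nat) (v u : vertex n) : Prop :=
  dist_le psi v u i /\ reachmap psi u \proper reachmap psi v.

Definition is_global_sink (n : nat) (psi : rel (vertex n)) (t : vertex n) : Prop :=
  outmap psi t = set0.

Definition i_nice (n : nat) (psi : rel (vertex n)) (i : nat) : Prop :=
  forall v : vertex n, ~ is_global_sink psi v -> exists u, i_covered psi i v u.

(* Main.v *)
Require Import Defs.
From mathcomp Require Import all_boot.
From mathcomp Require Import zify.
Set Implicit Arguments. Unset Strict Implicit. Unset Printing Implicit Defensive.

Lemma in_symd n (u v : vertex n) (k : 'I_n) : (k \in symd u v) = ((k \in u) != (k \in v)).
Proof. rewrite /symd !inE; by case: (k \in u); case: (k \in v). Qed.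

Lemma symdK n (u A : vertex n) : symd u (symd u A) = A.
Proof. apply/setP=> k; rewrite !in_symd; by case: (k \in u); case: (k \in A). Qed.

Lemma symdKr n (u A : vertex n) : symd (symd u A) A = u.
Proof. apply/setP=> k; rewrite !in_symd; by case: (k \in u); case: (k \in A). Qed.

Lemma symdC n (u v : vertex n) : symd u v = symd v u.
Proof. apply/setP=> k; rewrite !in_symd; by case: (k \in u); case: (k \in v). Qed.

Lemma symd_sub n (w u x : vertex n) (J : {set 'I_n}) : symd w u \subset J -> symd w x \subset J -> symd u x \subset J.
Proof.
move=> /subsetP H1 /subsetP H2; apply/subsetP=> k; rewrite in_symd => Hk.
case E: (k \in w).
- case Eu: (k \in u) Hk => Hk.
  + apply: H2; by rewrite in_symd E; move: Hk; case: (k \in x).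
  + apply: H1; by rewrite in_symd E Eu.
- case Eu: (k \in u) Hk => Hk.
  + apply: H1; by rewrite in_symd E Eu.
  + apply: H2; by rewrite in_symd E; move: Hk; case: (k \in x).
Qed.

Definition psiP n (p : vertex n -> vertex n) : rel (vertex n) :=
  fun u x => adjacent u x && (symd u x \subset p u).

Lemma adjE n (u x : vertex n) : adjacent u x -> exists j, x = symd u [set j].
Proof.
rewrite /adjacent => /cards1P [j Hj]; exists j; by rewrite -Hj symdK.
Qed.

Lemma adj1 n (u : vertex n) j : adjacent u (symd u [set j]).
Proof. by rewrite /adjacent symdK cards1. Qed.

Lemma psi1 n p (u : vertex n) j : psiP p u (symd u [set j]) = (j \in p u).
Proof. by rewrite /psiP adj1 symdK sub1set. Qed.

Lemma outmapP n p (u : vertex n) : outmap (psiP p) u = p u.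
Proof. apply/setP=> j; by rewrite inE psi1. Qed.

Definition good n (p : vertex n -> vertex n) :=
  (forall u, p (p u) = u) /\ (forall u, p u = u \/ exists j, p u = symd u [set j]).

Lemma q_eq n p (u : vertex n) j : good p -> (j \in symd u (p u)) -> p u = symd u [set j].
Proof.
move=> [_ pE]; case: (pE u) => [->|[k ->]]; first by rewrite in_symd eqxx.
by rewrite symdK inE => /eqP ->.
Qed.

Lemma good_orient n p : @good n p -> is_orientation (psiP p).
Proof.
move=> G; split; first by move=> u v /andP[].
move=> u x0 /adjE [j ->]; rewrite psi1.
set x := symd u [set j].
have Hu : u = symd x [set j] by rewrite /x symdKr.
rewrite {2}Hu psi1.
have Hx: forall y, (j \in symd y (p y)) = ((j \in p y) != (j \in y)).
  by move=> y; rewrite in_symd; case: (j \in y); case: (j \in p y).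
have Hjx : (j \in x) = ~~ (j \in u) by rewrite in_symd inE eqxx; case: (j \in u).
have Equ : (j \in symd u (p u)) = (j \in symd x (p x)).
  apply/idP/idP => H.
  - have E := q_eq G H; rewrite -/x in E.
    have E2 : p x = u by rewrite -E (proj1 G).
    by rewrite E2 in_symd Hjx; case: (j \in u).
  - have E := q_eq G H.
    have E2 : p u = x by rewrite Hu -E (proj1 G).
    by rewrite E2 in_symd Hjx; case: (j \in u).
move: Equ; rewrite !Hx Hjx; by case: (j \in u); case: (j \in p u); case: (j \in p x).
Qed.

Lemma sinkE n p J (w u : vertex n) :
  is_sink_in (psiP p) (face J w) u = (u \in face J w) && (p u :&: J == set0).
Proof.
rewrite /is_sink_in; case Hu: (u \in face J w) => //=.
move: Hu; rewrite inE => Hu.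
apply/forallP/eqP.
- move=> H; apply/setP=> j; rewrite !inE; apply/negP => /andP[Hj HJ].
  have := H (symd u [set j]); rewrite psi1 Hj implybF => /negP; apply.
  rewrite inE; apply: (symd_sub (w:=u)); first by rewrite symdC.
  - by rewrite symdK sub1set.
- move=> H x; apply/implyP; rewrite inE => Hx; apply/negP => /andP[Hadj Hs].
  have Hs2 := symd_sub Hu Hx.
  have : symd u x \subset p u :&: J by rewrite subsetI Hs Hs2.
  rewrite H subset0 => /eqP E; move: Hadj; by rewrite /adjacent E cards0.
Qed.

Lemma inj_help n p (u v : vertex n) j : good p ->
  (forall k, k \in symd u v -> (k \in symd u (p u)) != (k \in symd v (p v))) ->
  j \in symd u v -> j \in symd u (p u) -> False.
Proof.
move=> G F Hj Hq.
have Eu := q_eq G Hq.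
have qu : symd u (p u) = [set j] by rewrite Eu symdK.
have Hv : v != p u.
  apply/eqP => Ev.
  have pv : p v = u by rewrite Ev (proj1 G).
  have := F j Hj; by rewrite Hq pv (symdC v u) Hj.
have [k Hk Hkj] : exists2 k, k \in symd u v & k != j.
  case: (boolP [exists k, (k \in symd u v) && (k != j)]) => [/existsP [k /andP [Hk Hkj]]|H]; first by exists k.
  exfalso; case/negP: Hv; apply/eqP; rewrite Eu -[v](symdK u) ; congr symd.
  apply/setP => m; rewrite inE; apply/idP/idP.
  - move=> Hm; apply/negPn/negP => Hmj; case/negP: H; apply/existsP; exists m; by rewrite Hm Hmj.
  - by move/eqP ->.
have Hqv : k \in symd v (p v).
  have := F k Hk; rewrite qu inE (negbTE Hkj); by case: (k \in symd v (p v)).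
have Ev := q_eq G Hqv.
have Epu : p v = p u.
  rewrite Ev Eu; apply/setP => m; rewrite !in_symd !inE.
  case: (eqVneq m j) => [->|Hmj].
  - have : j != k by rewrite eq_sym.
    move/negbTE ->; move: Hj; rewrite in_symd; by case: (j \in u); case: (j \in v).
  case: (eqVneq m k) => [->|Hmk].
  - move: Hk; rewrite in_symd; by case: (k \in u); case: (k \in v).
  have Hm : m \notin symd u v.
    apply/negP => Hm; have := F m Hm; rewrite qu inE (negbTE Hmj).
    by rewrite Ev symdK inE (negbTE Hmk).
  move: Hm; rewrite in_symd; by case: (m \in u); case: (m \in v).
have Euv : u = v by rewrite -[u](proj1 G) -Epu (proj1 G).
by move: Hj; rewrite Euv in_symd eqxx.
Qed.

Lemma face_inj n p (J : {set 'I_n}) (u v : vertex n) : good p ->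
  symd u v \subset J -> p u :&: J = p v :&: J -> u = v.
Proof.
move=> G HJ Hp.
have F : forall k, k \in symd u v -> (k \in symd u (p u)) != (k \in symd v (p v)).
  move=> k Hk; have HkJ : k \in J by apply: (subsetP HJ).
  have : (k \in p u :&: J) = (k \in p v :&: J) by rewrite Hp.
  rewrite !inE HkJ !andbT => E; move: Hk; rewrite !in_symd E.
  by case: (k \in u); case: (k \in v); case: (k \in p v).
case: (set_0Vmem (symd u v)) => [E|[j Hj]].
  apply/setP => k; have : k \notin symd u v by rewrite E inE.
  rewrite in_symd; by case: (k \in u); case: (k \in v).
case Hq: (j \in symd u (p u)).
  by case: (inj_help G F Hj Hq).
have F' : forall k, k \in symd v u -> (k \in symd v (p v)) != (k \in symd u (p u)).
  by move=> k; rewrite symdC eq_sym; apply: F.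
have Hj' : j \in symd v u by rewrite symdC.
have Hq' : j \in symd v (p v) by have := F j Hj; rewrite Hq; case: (j \in symd v (p v)).
by case: (inj_help G F' Hj' Hq').
Qed.

Lemma good_USO n p : @good n p -> is_USO (psiP p).
Proof.
move=> G; split; first exact: good_orient.
move=> J w _.
set F := face J w.
set f := fun u : vertex n => p u :&: J.
have Hinj : {in F &, injective f}.
  move=> u v; rewrite !inE => Hu Hv E; apply: (face_inj G _ E).
  exact: symd_sub Hu Hv.
have cF : #|F| = #|powerset J|.
  have -> : F = (symd w) @^-1: powerset J.
    by apply/setP => u; rewrite inE [in RHS]inE powersetE.
  apply: card_preimset; apply: (can_inj (symdK w)).
have sub : f @: F \subset powerset J.
  apply/subsetP => x /imsetP [u _ ->]; by rewrite powersetE subsetIr.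
have EqF : f @: F = powerset J.
  by apply/eqP; rewrite eqEcard sub (card_in_imset Hinj) cF leqnn.
have : set0 \in f @: F by rewrite EqF powersetE sub0set.
case/imsetP => u Hu Hf.
exists u; split.
- by rewrite sinkE Hu -/(f u) -Hf eqxx.
- move=> x; rewrite sinkE => /andP [Hx /eqP Hx0].
  apply: Hinj => //; by rewrite -Hf.
Qed.

Lemma acyc_pot n (r : rel (vertex n)) (phi : vertex n -> nat) :
  (forall u x, r u x -> phi x < phi u) -> acyclic r.
Proof.
move=> H u v Huv; apply/negP => /connectP [s Hp Hl].
have Gen : forall v0 s0, path r v0 s0 -> phi (last v0 s0) <= phi v0.
  move=> v0 s0; elim: s0 v0 => [|y s0 IH] v0 //= /andP [Hvy Hp'].
  apply: leq_trans (IH _ Hp') _; exact: ltnW (H _ _ Hvy).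
have := Gen _ _ Hp.
rewrite -Hl => Hle; have := H _ _ Huv; by rewrite ltnNge Hle.
Qed.

Lemma adj_card n (u x : vertex n) : adjacent u x -> #|u| <= #|x| + 1.
Proof.
move=> /adjE [j ->]; case Hj: (j \in u).
- have -> : symd u [set j] = u :\ j.
    apply/setP => k; rewrite in_symd !inE; case: (eqVneq k j) => [->|]; by rewrite ?Hj //; case: (k \in u).
  by rewrite (cardsD1 j u) Hj addnC.
- have -> : symd u [set j] = j |: u.
    apply/setP => k; rewrite in_symd !inE; case: (eqVneq k j) => [->|]; by rewrite ?Hj //; case: (k \in u).
  rewrite cardsU1 Hj /=; lia.
Qed.

Lemma path_card n p (v : vertex n) s : path (psiP p) v s -> #|v| <= #|last v s| + size s.
Proof.
elim: s v => [|y s IH] v /=; first by rewrite addn0.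
move=> /andP [/andP [Hadj _] Hp].
move: (IH _ Hp) => H2; apply: leq_trans (adj_card Hadj) _; by rewrite addn1 addnS ltnS.
Qed.

Lemma reach_mono n (r : rel (vertex n)) (u w : vertex n) : connect r u w -> reachmap r w \subset reachmap r u.
Proof.
move=> Huw. apply/subsetP. move=> j. rewrite /reachmap !inE => /orP [Hj|/existsP [y /andP [Hwy Hj]]]; apply/orP; right; apply/existsP.
- exists w; by rewrite Huw inE.
- exists y; by rewrite (connect_trans Huw Hwy).
Qed.

Definition Z n : vertex n := [set j | nat_of_ord j == 0].
Definition sh n (u : vertex n) : vertex n := [set j : 'I_n | [exists i in u, nat_of_ord j == (nat_of_ord i).+1]].
Definition pp n (u : vertex n) : vertex n :=
  if #|u| == 1 then u :|: sh u
  else if #|u| == 2 then u :\: sh u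
  else if #|u| == 3 then u :|: Z n
  else if #|u| == 4 then u :\: Z n
  else u.

Lemma sh1 n (k j : 'I_n) : (j \in sh [set k]) = (nat_of_ord j == (nat_of_ord k).+1).
Proof.
rewrite inE; apply/existsP/idP => [[i /andP [/set1P -> //]]|H]; exists k; by rewrite set11.
Qed.

Lemma sh2 n (a b j : 'I_n) : (j \in sh [set a; b]) = (nat_of_ord j == (nat_of_ord a).+1) || (nat_of_ord j == (nat_of_ord b).+1).
Proof.
rewrite inE; apply/existsP/idP => [[i /andP [/set2P [->|->] ->]] //|]; first by rewrite orbT.
case/orP => H; [exists a | exists b]; by rewrite H !inE eqxx ?orbT.
Qed.

Lemma ZsubP n (u : vertex n) : Z n \subset u \/ exists z, [/\ nat_of_ord z = 0, z \notin u & Z n = [set z]].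
Proof.
case: (boolP (Z n \subset u)) => [H|/subsetPn [z Hz Hzu]]; [by left | right].
exists z; split => //; first by move: Hz; rewrite inE => /eqP.
apply/setP => j; rewrite !inE; move: Hz; rewrite inE => /eqP Hz.
apply/eqP/eqP => [Hj|->//]; apply: val_inj; by rewrite /= Hj Hz.
Qed.

Lemma Zcases n (u : vertex n) : Z n :&: u = set0 \/ exists z, [/\ nat_of_ord z = 0, z \in u & Z n = [set z]].
Proof.
case: (set_0Vmem (Z n :&: u)) => [->|[z Hz0]]; [by left|right].
move: Hz0; rewrite !inE => /andP [/eqP Hz Hzu]; exists z; split => //.
apply/setP => j; rewrite !inE; apply/eqP/eqP => [Hj|->//]; apply: val_inj; by rewrite /= Hj Hz.
Qed.

Lemma ppE1 n (u : vertex n) : #|u| = 1 -> pp u = u :|: sh u.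
Proof. by rewrite /pp => ->. Qed.
Lemma ppE2 n (u : vertex n) : #|u| = 2 -> pp u = u :\: sh u.
Proof. by rewrite /pp => ->. Qed.
Lemma ppE3 n (u : vertex n) : #|u| = 3 -> pp u = u :|: Z n.
Proof. by rewrite /pp => ->. Qed.
Lemma ppE4 n (u : vertex n) : #|u| = 4 -> pp u = u :\: Z n.
Proof. by rewrite /pp => ->. Qed.
Lemma ppE5 n (u : vertex n) : 4 < #|u| \/ #|u| = 0 -> pp u = u.
Proof. rewrite /pp; case=> [H|->] //; case: eqP => [E|_]; first by rewrite E in H.
case: eqP => [E|_]; first by rewrite E in H. case: eqP => [E|_]; first by rewrite E in H.
case: eqP => [E|_] //; by rewrite E in H. Qed.

Lemma sh1_none n (k : 'I_n) : n <= (nat_of_ord k).+1 -> sh [set k] = set0.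
Proof.
move=> H; apply/setP => j; rewrite sh1 inE; apply/negP => /eqP Hj.
have := ltn_ord j; by rewrite Hj ltnNge H.
Qed.

Lemma sh1_some n (k : 'I_n) (H : (nat_of_ord k).+1 < n) : sh [set k] = [set Ordinal H].
Proof. apply/setP => j; rewrite sh1 inE; apply/eqP/eqP => [Hj|->//]; exact: val_inj. Qed.

Lemma pp_consec n (a b : 'I_n) : nat_of_ord b = (nat_of_ord a).+1 -> pp [set a; b] = [set a].
Proof.
move=> Hb; have Hab : a != b by apply/eqP => E; move: Hb; rewrite E; lia.
rewrite ppE2 ?cards2 ?Hab //; apply/setP => j; rewrite in_setD sh2 !inE Hb.
case: (eqVneq j a) => [->|Hja].
  rewrite /= andbT; apply/norP; split; apply/eqP; lia.
case: (eqVneq j b) => [->|Hjb]; by rewrite /= ?Hb ?eqxx ?andbF.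
Qed.

Lemma pp_noncons n (a b : 'I_n) : nat_of_ord a < nat_of_ord b -> nat_of_ord b != (nat_of_ord a).+1 -> pp [set a; b] = [set a; b].
Proof.
move=> Hlt Hb; have Hab : a != b by apply/eqP => E; move: Hlt; rewrite E ltnn.
rewrite ppE2 ?cards2 ?Hab //; apply/setP => j; rewrite in_setD sh2 !inE.
case: (eqVneq j a) => [->|Hja].
  rewrite /= andbT; apply/norP; split; apply/eqP; lia.
case: (eqVneq j b) => [->|Hjb]; rewrite /= ?andbF ?andbT //.
apply/norP; split; apply/eqP; move: Hb => /eqP; lia.
Qed.

Lemma pp_single n (k : 'I_n) (H : (nat_of_ord k).+1 < n) : pp [set k] = [set k; Ordinal H].
Proof. by rewrite ppE1 ?cards1 // sh1_some. Qed.

Lemma pp_single_none n (k : 'I_n) : n <= (nat_of_ord k).+1 -> pp [set k] = [set k].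
Proof. move=> H; by rewrite ppE1 ?cards1 // sh1_none // setU0. Qed.

Lemma pp_shape n (u : vertex n) :
  pp u = u \/
  (exists j, [/\ j \notin u, pp u = j |: u & pp (j |: u) = u]) \/
  (exists j, [/\ j \in u, pp u = u :\ j & pp (u :\ j) = u]).
Proof.
have [H1|H1] := eqVneq #|u| 1.
  move/eqP: H1 => /cards1P [k ->].
  case: (ltnP (nat_of_ord k).+1 n) => Hk; last by left; rewrite pp_single_none.
  right; left; exists (Ordinal Hk); rewrite pp_single; split.
  - rewrite inE; apply/eqP => /(congr1 val) /=; lia.
  - by rewrite setUC.
  - by rewrite setUC pp_consec.
have [H2|H2] := eqVneq #|u| 2.
  move/eqP: H2 => /cards2P [a [b [Hab ->]]].
  wlog Hlt : a b Hab / nat_of_ord a < nat_of_ord b.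
    move=> W; case: (ltngtP (nat_of_ord a) (nat_of_ord b)) => h; first exact: W.
    - rewrite setUC; apply: W => //; by rewrite eq_sym.
    - by move: Hab; rewrite (val_inj h) eqxx.
  case: (eqVneq (nat_of_ord b) (nat_of_ord a).+1) => Hb; last by left; rewrite pp_noncons.
  right; right; exists b; split.
  - by rewrite !inE eqxx orbT.
  - rewrite pp_consec //; apply/setP => j; rewrite !inE.
    case: (eqVneq j b) => [->|] /=; first by rewrite eq_sym (negbTE Hab).
    by rewrite orbF.
  - have -> : [set a; b] :\ b = [set a].
      apply/setP => j; rewrite !inE; case: (eqVneq j b) => [->|] /=; first by rewrite eq_sym (negbTE Hab).
      by rewrite orbF.
    have Hk : (nat_of_ord a).+1 < n by rewrite -Hb ltn_ord.
    rewrite pp_single; congr [set _; _]; apply: val_inj; by rewrite /= Hb.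
have [H3|H3] := eqVneq #|u| 3.
  case: (Zcases u) => [E|[z [Hz Hzu EZ]]].
  - case: (boolP (Z n \subset u)) => HZ.
      by left; rewrite ppE3 //; apply/setUidPl.
    case/subsetPn: HZ => z Hz Hzu.
    right; left; exists z; split => //.
    + rewrite ppE3 // setUC; congr (_ :|: _); apply/setP => j; rewrite !inE.
      move: Hz; rewrite inE => /eqP Hz.
      apply/eqP/eqP => [Hj|->//]; apply: val_inj; by rewrite /= Hj Hz.
    + have Hc : #|z |: u| = 4 by rewrite cardsU1 Hzu H3.
      rewrite ppE4 //; apply/setP => j; rewrite !inE.
      move: Hz; rewrite inE => /eqP Hz.
      case: (eqVneq j z) => [->|Hjz]; first by rewrite (negbTE Hzu) Hz eqxx.
      rewrite orFb; case: (j \in u); rewrite /= ?andbT ?andbF //.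
      apply/eqP => Hj; case/eqP: Hjz; apply: val_inj; by rewrite /= Hj Hz.
  - by left; rewrite ppE3 //; apply/setUidPl; rewrite EZ sub1set.
have [H4|H4] := eqVneq #|u| 4.
  case: (Zcases u) => [E|[z [Hz Hzu EZ]]].
  - left; rewrite ppE4 //; apply/setDidPl; by rewrite -setI_eq0 setIC E.
  - right; right; exists z; split => //; first by rewrite ppE4 // EZ.
    have Hc : #|u :\ z| = 3 by have := cardsD1 z u; rewrite Hzu H4 add1n => -[] <-.
    by rewrite ppE3 // EZ setUC setD1K.
left; apply: ppE5.
move: H1 H2 H3 H4; case: #|u| => [|[|[|[|[|m]]]]] //; [by right | by left].
Qed.

Lemma symd_in n (u : vertex n) j : j \in u -> symd u [set j] = u :\ j.
Proof. move=> Hj; apply/setP => k; rewrite in_symd !inE; case: (eqVneq k j) => [->|]; by rewrite ?Hj //; case: (k \in u). Qed.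

Lemma symd_out n (u : vertex n) j : j \notin u -> symd u [set j] = j |: u.
Proof. move=> Hj; apply/setP => k; rewrite in_symd !inE; case: (eqVneq k j) => [->|]; by rewrite ?(negbTE Hj) //; case: (k \in u). Qed.

Lemma good_pp n : good (@pp n).
Proof.
split => u; case: (pp_shape u) => [E|[[j [Hj E1 E2]]|[j [Hj E1 E2]]]].
- by rewrite E E.
- by rewrite E1 E2.
- by rewrite E1 E2.
- by left.
- by right; exists j; rewrite E1 symd_out.
- by right; exists j; rewrite E1 symd_in.
Qed.

Definition sumv n (u : vertex n) := \sum_(j in u) nat_of_ord j.
Definition phi n (u : vertex n) : nat :=
  if #|u| == 0 then 0
  else if #|u| == 1 then 2 * (n - sumv u)
  else if #|u| == 2 then (if u :&: sh u != set0 then 2 * n - sumv u else 2 * n + 1)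
  else if #|u| == 3 then (if Z n \subset u then 2 * n + 2 else 2 * n + 4)
  else if (#|u| == 4) && (Z n \subset u) then 2 * n + 3 else 2 * n + 4 + #|u|.

Lemma sumv1 n (k : 'I_n) : sumv [set k] = k.
Proof. by rewrite /sumv big_set1. Qed.

Lemma sumv2 n (a b : 'I_n) : a != b -> sumv [set a; b] = a + b.
Proof. move=> Hab; by rewrite /sumv big_setU1 ?big_set1 // inE. Qed.

Lemma phi_le2 n (x : vertex n) : #|x| <= 2 -> phi x <= 2 * n + 1.
Proof.
move=> H; rewrite /phi; case: eqP => // H0; case: eqP => [_|H1]; first lia.
case: eqP => [_|H2]; first by case: ifP => _; lia.
exfalso; lia.
Qed.

Lemma phi_le n (x : vertex n) : phi x <= 2 * n + 4 + #|x|.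
Proof.
rewrite /phi; case: eqP => // _; case: eqP => [_|_]; first lia.
case: eqP => [_|_]; first by case: ifP => _; lia.
case: eqP => [->|_]; first by case: ifP => _; lia.
by case: ifP => _; lia.
Qed.

Lemma phi0 n : phi (set0 : vertex n) = 0.
Proof. by rewrite /phi cards0. Qed.

Lemma phi1 n (k : 'I_n) : phi [set k] = 2 * (n - k).
Proof. by rewrite /phi cards1 sumv1. Qed.

Lemma phi_consec n (a b : 'I_n) : nat_of_ord b = (nat_of_ord a).+1 -> phi [set a; b] = 2 * n - (a + b).
Proof.
move=> Hb; have Hab : a != b by apply/eqP => E; move: Hb; rewrite E; lia.
rewrite /phi cards2 Hab /= sumv2 //.
have -> : [set a; b] :&: sh [set a; b] != set0.
  apply/set0Pn; exists b; by rewrite in_setI sh2 Hb !inE !eqxx !orbT.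
done.
Qed.

Lemma phi_noncons n (a b : 'I_n) : a < b -> nat_of_ord b != (nat_of_ord a).+1 -> phi [set a; b] = 2 * n + 1.
Proof.
move=> Hlt Hb; have Hab : a != b by apply/eqP => E; move: Hlt; rewrite E ltnn.
rewrite /phi cards2 Hab /=.
have -> : [set a; b] :&: sh [set a; b] = set0.
  apply/setP => j; rewrite in_setI sh2 !inE.
  case: (eqVneq j a) => [->|_]; first by rewrite /=; apply/negP => /orP [] /eqP; lia.
  case: (eqVneq j b) => [->|_] //=; apply/negP => /orP [] /eqP; move: Hb => /eqP; lia.
by rewrite eqxx.
Qed.

Lemma phi_edge n (u : vertex n) j : j \in pp u -> phi (symd u [set j]) < phi u.
Proof.
have [H1|H1] := eqVneq #|u| 1.
  move/eqP: H1 => /cards1P [k ->].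
  case: (ltnP k.+1 n) => Hk.
  - rewrite pp_single !inE => /orP [/eqP ->|/eqP ->].
    + rewrite symd_in ?inE // setDv phi0 phi1; lia.
    + have Hkk : Ordinal Hk \notin [set k] by rewrite inE; apply/eqP => /(congr1 val) /=; lia.
      rewrite symd_out // setUC phi_consec ?phi1 //=; lia.
  - rewrite pp_single_none // inE => /eqP ->.
    rewrite symd_in ?inE // setDv phi0 phi1; have := ltn_ord k; lia.
have [H2|H2] := eqVneq #|u| 2.
  move/eqP: H2 => /cards2P [a [b [Hab ->]]].
  wlog Hlt : a b Hab / a < b.
    move=> W; case: (ltngtP a b) => h; first exact: W.
    - rewrite setUC; apply: W => //; by rewrite eq_sym.
    - by move: Hab; rewrite (val_inj h) eqxx.
  case: (eqVneq (nat_of_ord b) (nat_of_ord a).+1) => Hb.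
  - rewrite pp_consec // inE => /eqP ->.
    have -> : symd [set a; b] [set a] = [set b].
      apply/setP => m; rewrite in_symd !inE; case: (eqVneq m a) => [->|] /=; first by rewrite (negbTE Hab).
      by case: (m == b).
    rewrite phi1 phi_consec //; have := ltn_ord b; lia.
  - rewrite pp_noncons // phi_noncons // => Hj.
    rewrite symd_in //.
    have : #|[set a; b] :\ j| == 1 by have := cardsD1 j [set a; b]; rewrite Hj cards2 Hab /= add1n => -[] <-.
    move=> /cards1P [k ->]; rewrite phi1; lia.
have [H3|H3] := eqVneq #|u| 3.
  rewrite ppE3 // in_setU => /orP [Hj|Hj].
  - rewrite symd_in //; apply: (@leq_ltn_trans (2 * n + 1)).
      apply: phi_le2; have := cardsD1 j u; rewrite Hj H3 /=; lia.
    rewrite /phi H3 /=; case: ifP => _; lia.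
  - case: (boolP (j \in u)) => Hju.
      rewrite symd_in //; apply: (@leq_ltn_trans (2 * n + 1)).
        apply: phi_le2; have := cardsD1 j u; rewrite Hju H3 /=; lia.
      rewrite /phi H3 /=; case: ifP => _; lia.
    have HZ : ~~ (Z n \subset u) by apply/subsetPn; exists j.
    have HZx : Z n \subset j |: u.
      apply/subsetP => z; rewrite inE => /eqP Hz; rewrite !inE; apply/orP; left.
      apply/eqP; apply: val_inj; move: Hj; rewrite inE => /eqP; rewrite /= Hz => ->.
      done.
    have Hc : #|j |: u| = 4 by rewrite cardsU1 Hju H3.
    rewrite symd_out // /phi Hc H3 HZx (negbTE HZ) /=; lia.
have [H4|H4] := eqVneq #|u| 4.
  rewrite ppE4 // in_setD => /andP [HjZ Hj].
  have Hc : #|u :\ j| = 3 by have := cardsD1 j u; rewrite Hj H4 add1n => -[] <-.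
  rewrite symd_in //.
  case: (boolP (Z n \subset u)) => HZ.
  - have HZx : Z n \subset u :\ j.
      apply/subsetP => z Hz; rewrite !inE (subsetP HZ _ Hz) andbT; apply/eqP => E; move: HjZ; by rewrite -E Hz.
    rewrite /phi Hc H4 HZx HZ /=; lia.
  - rewrite {2}/phi H4 (negbTE HZ) /=; apply: leq_ltn_trans (phi_le _) _; rewrite Hc; lia.
have H5 : 4 < #|u| \/ #|u| = 0 by move: H1 H2 H3 H4; case: #|u| => [|[|[|[|[|m]]]]] //; [by right | by left].
rewrite ppE5 // => Hj.
case: H5 => H5; last by move: Hj; have := cards0_eq H5 => ->; rewrite inE.
have Hc : #|u :\ j| = #|u| - 1 by have := cardsD1 j u; rewrite Hj /=; lia.
rewrite symd_in //; apply: leq_ltn_trans (phi_le _) _.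
have -> : phi u = 2 * n + 4 + #|u|.
  rewrite /phi; have -> : (#|u| == 0) = false by apply/eqP; lia.
  have -> : (#|u| == 1) = false by apply/eqP; lia.
  have -> : (#|u| == 2) = false by apply/eqP; lia.
  have -> : (#|u| == 3) = false by apply/eqP; lia.
  have -> : (#|u| == 4) = false by apply/eqP; lia.
  done.
rewrite Hc; lia.
Qed.

Lemma AUSO_pp n : is_AUSO (psiP (@pp n)).
Proof.
split; first exact: good_USO (@good_pp n).
apply: (acyc_pot (phi := @phi n)) => u x /andP [Hadj Hs].
move: Hadj Hs => /adjE [j ->]; rewrite symdK sub1set; exact: phi_edge.
Qed.

Lemma step n (u : vertex n) j : j \in pp u -> connect (psiP (@pp n)) u (symd u [set j]).
Proof. move=> H; apply: connect1; by rewrite psi1. Qed.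

Lemma pdown n (y : vertex n) : 3 <= #|y| -> y :\: Z n \subset pp y.
Proof.
move=> H.
have [H3|H3] := eqVneq #|y| 3.
  rewrite ppE3 //; apply/subsetP => k; rewrite !inE => /andP [_ ->] //.
have [H4|H4] := eqVneq #|y| 4; first by rewrite ppE4.
rewrite ppE5; first exact: subsetDl.
left; move: H H3 H4; case: #|y| => [|[|[|[|[|m]]]]] //.
Qed.

Lemma Zz0 n (H : 0 < n) : Z n = [set Ordinal H].
Proof. apply/setP => j; rewrite !inE; apply/eqP/eqP => [Hj|->//]; exact: val_inj. Qed.

Lemma chain n (H : 0 < n) m (Hm : m < n) :
  connect (psiP (@pp n)) [set Ordinal H] [set Ordinal Hm].
Proof.
elim: m Hm => [|m IH] Hm.
  by have -> : Ordinal Hm = Ordinal H by apply: val_inj.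
have Hm' : m < n by apply: ltnW.
apply: connect_trans (IH Hm') _.
have Hk : (nat_of_ord (Ordinal Hm')).+1 < n by [].
have Hne : Ordinal Hm' != Ordinal Hm by apply/eqP => /(congr1 val) /=; lia.
have E1 : symd [set Ordinal Hm'] [set Ordinal Hk] = [set Ordinal Hm'; Ordinal Hk].
  rewrite symd_out; first by rewrite setUC.
  rewrite inE; apply/eqP => /(congr1 val) /=; lia.
have C1 : connect (psiP (@pp n)) [set Ordinal Hm'] [set Ordinal Hm'; Ordinal Hk].
  rewrite -E1; apply: step; by rewrite pp_single !inE eqxx ?orbT.
apply: connect_trans C1 _.
have E2 : symd [set Ordinal Hm'; Ordinal Hk] [set Ordinal Hm'] = [set Ordinal Hm].
  rewrite symd_in ?inE ?eqxx //; apply/setP => x; rewrite !inE.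
  have -> : Ordinal Hk = Ordinal Hm by apply: val_inj.
  case: (eqVneq x (Ordinal Hm')) => [->|] //=; by rewrite (negbTE Hne).
rewrite -E2; apply: step; by rewrite pp_consec // inE.
Qed.

Lemma hub n (H : 0 < n) (H1 : 1 < n) : reachmap (psiP (@pp n)) [set Ordinal H] = setT.
Proof.
apply/setP => j; rewrite [RHS]inE /reachmap in_setU; apply/orP; right; rewrite inE; apply/existsP.
case: j => [[|m] Hj].
- exists [set Ordinal H; Ordinal H1]; apply/andP; split.
  + have E : symd [set Ordinal H] [set Ordinal H1] = [set Ordinal H; Ordinal H1].
      rewrite symd_out; first by rewrite setUC.
      by rewrite inE; apply/eqP => /(congr1 val).
    rewrite -E; apply: step; rewrite pp_single !inE; apply/orP; right; apply/eqP; exact: val_inj.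
  + rewrite outmapP pp_consec // inE; apply/eqP; exact: val_inj.
- have Hm : m < n by apply: ltnW.
  exists [set Ordinal Hm]; apply/andP; split; first exact: chain.
  rewrite outmapP pp_single !inE; apply/orP; right; apply/eqP; exact: val_inj.
Qed.

Lemma descA n (H : 0 < n) m : forall u : vertex n, #|u| = m -> Ordinal H \in u -> 3 <= m ->
  connect (psiP (@pp n)) u [set Ordinal H].
Proof.
set z0 := Ordinal H.
elim: m => [|m IH] u Hc Hz Hm //.
have [E3|E3] := eqVneq m 2.
- have : #|u :\ z0| == 2 by have := cardsD1 z0 u; rewrite Hz Hc E3 add1n => -[] <-.
  move=> /cards2P [a [b [Hab Eab]]].
  have Ha : a \in u :\ z0 by rewrite Eab !inE eqxx.
  have Hb : b \in u :\ z0 by rewrite Eab !inE eqxx orbT.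
  wlog Hlt : a b Hab Eab Ha Hb / a < b.
    move=> W; case: (ltngtP a b) => h; first by apply: (W a b).
    - apply: (W b a) => //; [by rewrite eq_sym | by rewrite Eab setUC].
    - by move: Hab; rewrite (val_inj h) eqxx.
  have Ha0 : a != z0 by move: Ha; rewrite !inE => /andP [].
  have Hb0 : b != z0 by move: Hb; rewrite !inE => /andP [].
  have Hau : a \in u by move: Ha; rewrite !inE => /andP [].
  have Hva : 0 < a.
    rewrite lt0n; apply/eqP => E; case/eqP: Ha0; exact: val_inj.
  have Hzb : z0 != b by rewrite eq_sym.
  have C1 : connect (psiP (@pp n)) u [set z0; b].
    have -> : [set z0; b] = symd u [set a].
      rewrite symd_in //; apply/setP => x; rewrite !inE.
      case: (eqVneq x z0) => [->|Hx0]; first by rewrite /= Hz andbT eq_sym Ha0.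
      have Hxu : (x \in u) = (x == a) || (x == b).
        by have := Eab; move/setP/(_ x); rewrite !inE (negbTE Hx0).
      rewrite Hxu /=; case: (eqVneq x a) => [->|] /=; first by rewrite (negbTE Hab).
      done.
    apply: step; apply: (subsetP (pdown _)); first by rewrite Hc.
    by rewrite Zz0 !inE Ha0 Hau.
  apply: connect_trans C1 _.
  have E2 : symd [set z0; b] [set b] = [set z0].
    apply/esym; rewrite symd_in; last by rewrite !inE eqxx orbT.
    apply/setP => x; rewrite !inE; case: (eqVneq x b) => [->|] /=; first exact: negbTE.
    by rewrite orbF.
  have Hbp : b \in pp [set z0; b].
    rewrite pp_noncons; [by rewrite !inE eqxx orbT | by rewrite /=; lia | apply/eqP => /= E; lia].
  have C2 := step Hbp; by rewrite E2 in C2.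
- have Hm3 : 3 <= m by lia.
  have : u :\ z0 != set0.
    apply/eqP => E; have := cardsD1 z0 u; rewrite E cards0 Hc; lia.
  case/set0Pn => j; rewrite !inE => /andP [Hj0 Hj].
  apply: connect_trans (IH (u :\ j) _ _ Hm3).
  - rewrite -symd_in //; apply: step; apply: (subsetP (pdown _)); first by rewrite Hc.
    by rewrite Zz0 !inE Hj0 Hj.
  - by have := cardsD1 j u; rewrite Hj Hc add1n => -[] <-.
  - by rewrite !inE Hz eq_sym Hj0.
Qed.

Lemma descB n (H : 0 < n) m : forall u : vertex n, #|u| = m -> 3 <= m ->
  connect (psiP (@pp n)) u [set Ordinal H].
Proof.
set z0 := Ordinal H.
elim: m => [|m IH] u Hc Hm //.
case: (boolP (z0 \in u)) => Hz; first exact: (descA Hc).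
have [E3|E3] := eqVneq m 2.
- have Hp : z0 \in pp u by rewrite ppE3 ?Hc ?E3 // Zz0 !inE eqxx orbT.
  have C1 := step Hp; rewrite symd_out // in C1.
  apply: connect_trans C1 (descA (m := 4) _ _ _) => //.
  + by rewrite cardsU1 Hz Hc E3.
  + by rewrite !inE eqxx.
- have Hm3 : 3 <= m by lia.
  have : u != set0 by apply/eqP => E; move: Hc; rewrite E cards0.
  case/set0Pn => j Hj.
  have Hj0 : j != z0 by apply/eqP => E; move: Hz; rewrite -E Hj.
  apply: connect_trans (IH (u :\ j) _ Hm3).
  - rewrite -symd_in //; apply: step; apply: (subsetP (pdown _)); first by rewrite Hc.
    by rewrite Zz0 !inE Hj0 Hj.
  - by have := cardsD1 j u; rewrite Hj Hc add1n => -[] <-.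
Qed.

Theorem theorem16 :
  forall n : nat, 0 < n ->
  exists psi : rel (vertex n),
    is_AUSO psi /\ (forall i : nat, i + 2 < n -> ~ i_nice psi i).
Proof.
move=> n Hn; exists (psiP (@pp n)); split; first exact: AUSO_pp.
move=> i Hi Hnice.
have H1 : 1 < n by lia.
have Hc : #|[set: 'I_n]| = n by rewrite cardsT card_ord.
have Hv : ~ is_global_sink (psiP (@pp n)) [set: 'I_n].
  rewrite /is_global_sink outmapP => E.
  have : Ordinal H1 \in pp [set: 'I_n].
    apply: (subsetP (pdown _)); first by rewrite Hc; lia.
    by rewrite Zz0 !inE.
  by rewrite E inE.
case: (Hnice _ Hv) => u [[s [Hs Hp Hl]] Hpr].
have Hu : 3 <= #|u|.
  have := path_card Hp; rewrite Hl Hc; lia.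
have Ru : reachmap (psiP (@pp n)) u = setT.
  apply/eqP; rewrite eqEsubset subsetT /=.
  rewrite -(hub Hn H1); apply: reach_mono; exact: (descB Hn (erefl _) Hu).
move: Hpr; by rewrite properE Ru subsetT andbF.
Qed.
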